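(* For every positive integer $n$, the number $Z(n)=\sum_{k=0}^{n-1}M_{k}(n)$ is an integer, where $M_k(n)=\frac{1+(-1)^{k}k!(n-k-1)!}{n}$.
   Context: For integers $n\geq 1$ and $0\leq k\leq n-1$, $M_{k}(n)=\frac{1+(-1)^{k}k!(n-k-1)!}{n}$ (a rational number), and $Z(n)=\sum_{k=0}^{n-1}M_{k}(n)$. *)

(* Defs.v *)
From mathcomp Require Import all_boot all_order all_algebra.
Set Implicit Arguments. Unset Strict Implicit. Unset Printing Implicit Defensive.
Import Order.TTheory GRing.Theory Num.Theory.
Local Open Scope ring_scope.

Definition M (n k : nat) : rat :=
  (1 + (-1) ^+ k * (k`!)%:R * ((n - k - 1)`!)%:R) / n%:R.

Definition Z (n : nat) : rat := \sum_(0 <= k < n) M n k.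

(* Main.v *)
Require Import Defs.
From mathcomp Require Import all_boot all_order all_algebra.
From mathcomp Require Import ring zify.
Import Order.TTheory GRing.Theory Num.Theory.
Local Open Scope ring_scope.

Definition b (m k : nat) : rat := (-1) ^+ k * (k`!)%:R * ((m.+1 - k)`!)%:R.

Lemma key (m : nat) :
  (m.+2)%:R * (\sum_(0 <= k < m.+1) (-1) ^+ k * (k`!)%:R * ((m - k)`!)%:R)
  = (m.+1)`!%:R * (1 + (-1) ^+ m) :> rat.
Proof.
have step : forall k, (k < m.+1)%N ->
   (m.+2)%:R * ((-1) ^+ k * (k`!)%:R * ((m - k)`!)%:R) = - (b m k.+1 - b m k).
  move=> k hk; rewrite /b.
  have hd : (m.+1 - k)%N = (m - k).+1 by lia.
  have hd2 : (m.+1 - k.+1)%N = (m - k)%N by [].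
  rewrite hd hd2 !factS exprS !natrM.
  have -> : (m.+2)%:R = ((m - k).+1)%:R + (k.+1)%:R :> rat.
    by rewrite -natrD; congr (_%:R); lia.
  ring.
rewrite mulr_sumr (eq_big_nat _ _ (fun k hk => step k (andP hk).2)) sumrN telescope_sumr // /b.
rewrite subn0 subnn fact0 expr0 exprS; ring.
Qed.

Theorem theorem1 (n : nat) (hn : (1 <= n)%N) : exists z : int, Z n = z%:~R.
Proof.
case: n hn => [//|m] _.
set S := \sum_(0 <= k < m.+1) (-1) ^+ k * (k`!)%:R * ((m - k)`!)%:R : rat.
have hZ : Z m.+1 = 1 + S / (m.+1)%:R.
  rewrite /Z /M -mulr_suml big_split /= sumr_const_nat subn0.
  rewrite mulrDl. idtac. rewrite divff ?pnatr_eq0 //; congr (_ + _ / _).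
  by apply: eq_bigr => k _; have -> : (m.+1 - k - 1 = m - k)%N by lia.
have hk := key m; rewrite -/S in hk.
have m2 : (m.+2)%:R != 0 :> rat by rewrite pnatr_eq0.
case/boolP: (odd m) => hm.
  exists 1; rewrite hZ.
  have : S = 0.
    move: hk; rewrite -signr_odd hm expr1 subrr mulr0 => /eqP.
    by rewrite mulf_eq0 (negbTE m2) => /eqP.
  by move=> ->; rewrite mul0r addr0.
have hm2 : m = (m./2).*2 by rewrite -{1}(odd_double_half m) (negbTE hm).
set i := m./2 in hm2.
have hdv : (i.+1 %| (m`!))%N.
  case: i hm2 => [|i'] ->; first by rewrite fact0.
  by apply: dvdn_fact; rewrite doubleS -addnn; lia.
exists (1 + (m`! %/ i.+1)%N%:Z); rewrite hZ.

rewrite intrD rmorph1 -[X in _ = _ + X]pmulrn; congr (_ + _).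
rewrite natr_div //; last by rewrite unitfE pnatr_eq0.
have : S = (m.+1)`!%:R * (1 + (-1) ^+ m) / (m.+2)%:R.
  by rewrite -hk mulrC mulKf.
move=> ->; rewrite -signr_odd (negbTE hm) expr0 factS natrM.
have -> : (m.+2)%:R = (i.+1)%:R * 2 :> rat.
  by rewrite hm2 -natrM muln2 doubleS.
field.
by rewrite !nat1r !pnatr_eq0.
Qed.
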